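(* Let $G=(V,E)$ be a hypergraph and $\emptyset\neq R\subsetneq U\subsetneq V$. Let $S=\{u_1,\dots,u_p\}\subseteq U\setminus R$ with $p\ge 2$. For each $i\in[p]$ let $(\overline{A_i},A_i)$ be a minimum $((S\cup R)\setminus\{u_i\},\overline U)$-terminal cut, and suppose $u_i\in A_i\setminus\bigl(\bigcup_{j\in[p]\setminus\{i\}}A_j\bigr)$ for every $i\in[p]$. Let \[Z:=\bigcap_{i=1}^p\overline{A_i},\quad W:=\bigcup_{1\le i<j\le p}(A_i\cap A_j),\quad Y_i:=A_i\setminus W\ \ \forall i\in[p].\] Then $(Y_1,\dots,Y_p,W,Z)$ is a $(p+2)$-partition of $V$ with \[\sigma(Y_1,\dots,Y_p,W,Z)\le\min\{d(A_i)+d(A_j): i,j\in[p],\ i\ne j\}.\]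
   Context: A hypergraph $G=(V,E)$ has finite vertex set $V$ and finite multiset $E$ of hyperedges (subsets of $V$). For $X\subseteq V$, $\overline X=V\setminus X$ and $d(X)$ is the number of hyperedges meeting both $X$ and $\overline X$. For disjoint $S',T'\subseteq V$, a 2-partition $(X,\overline X)$ is an $(S',T')$-terminal cut if $S'\subseteq X\subseteq V\setminus T'$, and it is minimum if $d(X)$ is minimum among such cuts. For a partition $(Y_1,\dots,Y_p,W,Z)$ of $V$: $\mathrm{cost}(Y_1,\dots,Y_p,W,Z)$ is the number of hyperedges meeting at least two parts; $\mathrm{cost}(W,Z)$ is the number of hyperedges $e\subseteq W\cup Z$ meeting both $W$ and $Z$; $\alpha(Y_1,\dots,Y_p,W,Z)$ is the number of hyperedges meeting $Z$ and at least two of $Y_1,\dots,Y_p,W$; $\beta(Y_1,\dots,Y_p,Z)$ is the number of hyperedges disjoint from $Z$ meeting at least two of $Y_1,\dots,Y_p$; $\sigma:=\mathrm{cost}(Y_1,\dots,Y_p,W,Z)+\mathrm{cost}(W,Z)+\alpha+\beta$. *)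

(* Defs.v *)
(* hypergraphs on a finite vertex type V,
   hyperedges given as a multiset (seq) of vertex sets. *)
From mathcomp Require Import all_boot.
Set Implicit Arguments. Unset Strict Implicit. Unset Printing Implicit Defensive.

Section Hyper.
Variable V : finType.

Definition meets (e X : {set V}) : bool := e :&: X != set0.

Definition dcut (E : seq {set V}) (X : {set V}) : nat :=
  count (fun e => meets e X && meets e (~: X)) E.

Definition terminal_cut (S' T' X : {set V}) : bool :=
  (S' \subset X) && (X \subset ~: T').

Definition min_terminal_cut (E : seq {set V}) (S' T' X : {set V}) : Prop :=
  terminal_cut S' T' X /\
  forall Y : {set V}, terminal_cut S' T' Y -> dcut E X <= dcut E Y.

Definition meets_two (parts : seq {set V}) (e : {set V}) : bool :=
  1 < count (meets e) parts.

Definition cost_parts (E : seq {set V}) (parts : seq {set V}) : nat :=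
  count (meets_two parts) E.

Definition cost2 (E : seq {set V}) (W Z : {set V}) : nat :=
  count (fun e : {set V} => (e \subset W :|: Z) && meets e W && meets e Z) E.

Definition alpha (E : seq {set V}) (Ys : seq {set V}) (W Z : {set V}) : nat :=
  count (fun e => meets e Z && meets_two (rcons Ys W) e) E.

Definition beta (E : seq {set V}) (Ys : seq {set V}) (Z : {set V}) : nat :=
  count (fun e => ~~ meets e Z && meets_two Ys e) E.

Definition sigma (E : seq {set V}) (Ys : seq {set V}) (W Z : {set V}) : nat :=
  cost_parts E (Ys ++ [:: W; Z]) + cost2 E W Z + alpha E Ys W Z + beta E Ys Z.

Definition is_partition_of_V (parts : seq {set V}) : Prop :=
  (forall i j, i < size parts -> j < size parts -> i != j ->
     [disjoint nth set0 parts i & nth set0 parts j]) /\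
  (forall v : V, exists2 X, X \in parts & v \in X).

End Hyper.

(* Main.v *)
Require Import Defs.
From mathcomp Require Import all_boot.
From mathcomp Require Import zify.
Set Implicit Arguments. Unset Strict Implicit. Unset Printing Implicit Defensive.

Definition sig (z w : bool) (y : nat) : nat :=
  (1 < y + (w + (z + 0))) + (((y == 0) && w) && z) + (z && (1 < y + w)) + (~~ z && (1 < y)).

Lemma sig_step (a0 a1 a2 b0 b1 b2 : bool) (y ys : nat) :
 ys <= y -> (ys < y -> b1) -> (b1 -> 0 < y) -> a1 = (0 < ys) ->
 sig a0 (a2 || b2 || b1) (ys + b0) + (b2 && [|| a0, a1, a2, b0 | b1])
 <= sig (a0||b0) (a2||b2) y + ([|| b0, b1 | b2] && [|| a0, a1 | a2]).
Proof.
move=> H1 H2 H3 ->.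
case: y H1 H2 H3 => [|[|y]]; case: ys => [|[|ys]] //=;
case: a0; case: a2; case: b0; case: b1; case: b2 => //= H1 H2 H3; try lia;
 try (have := H2 isT; done); try (have := H3 isT; done).
Qed.

Section Gen.
Variable V : finType.

Lemma meetsP (e X : {set V}) : reflect (exists2 v, v \in e & v \in X) (meets e X).
Proof.
rewrite /meets; apply: (iffP (set0Pn _)) => [[v]|[v]]; rewrite ?inE.
  by case/andP=> ??; exists v.
by move=> ??; exists v; rewrite inE; apply/andP.
Qed.

Lemma meetsU (e X Y : {set V}) : meets e (X :|: Y) = meets e X || meets e Y.
Proof. by rewrite /meets setIUr setU_eq0 negb_and. Qed.

Lemma meetsS (e X Y : {set V}) : X \subset Y -> meets e X -> meets e Y.
Proof.
move=> /subsetP sXY /meetsP [v ve vX]; apply/meetsP; exists v => //; exact: sXY.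
Qed.

Lemma meets_eq (e X Y : {set V}) : X = Y -> meets e X = meets e Y.
Proof. by move=> ->. Qed.

Variable I : eqType.
Variable A : I -> {set V}.

Definition cnt (s : seq I) (v : V) := count (fun k => v \in A k) s.
Definition C0 s := [set v | cnt s v == 0].
Definition C1 s := [set v | cnt s v == 1].
Definition C2 s := [set v | 1 < cnt s v].
Definition zq s e := meets e (C0 s).
Definition wq s e := meets e (C2 s).
Definition yq s e := count (fun l => meets e (A l :&: C1 s)) s.
Definition cross (e X : {set V}) := meets e X && meets e (~: X).

Lemma cnt_pos s l v : l \in s -> v \in A l -> 0 < cnt s v.
Proof. by move=> ls vl; rewrite /cnt -has_count; apply/hasP; exists l. Qed.

Lemma cnt_has s v : 0 < cnt s v -> exists2 l, l \in s & v \in A l.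
Proof. by rewrite /cnt -has_count => /hasP. Qed.


Lemma meets_split (e X B : {set V}) : meets e X = meets e (X :\: B) || meets e (X :&: B).
Proof. by rewrite orbC -meetsU setID. Qed.

Ltac solve_set k s := let v := fresh "v" in apply/setP => v; rewrite !inE /cnt /=;
  case: (v \in A k); case: (count _ s) => [|[|n]] //=.

Lemma step s k e :
  sig (zq (k::s) e) (wq (k::s) e) (yq (k::s) e) + cross e (A k :&: C2 s)
  <= sig (zq s e) (wq s e) (yq s e) + cross e (A k).
Proof.
set a0 := meets e (C0 s :\: A k); set b0 := meets e (C0 s :&: A k).
set a1 := meets e (C1 s :\: A k); set b1 := meets e (C1 s :&: A k).
set a2 := meets e (C2 s :\: A k); set b2 := meets e (C2 s :&: A k).
set ys := count (fun l => meets e (A l :&: C1 s :\: A k)) s.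
set y := yq s e.
have hz' : zq (k::s) e = a0.
  by rewrite /zq /a0; apply: meets_eq; solve_set k s.
have hw' : wq (k::s) e = a2 || b2 || b1.
  rewrite /wq /a2 /b2 /b1 -!meetsU; apply: meets_eq; solve_set k s.
have hy' : yq (k::s) e = ys + b0.
  rewrite /yq /= addnC; congr (_ + _).
    apply: eq_in_count => l ls /=; apply: meets_eq.
    apply/setP => v; rewrite !inE; case vl: (v \in A l); rewrite ?andbF //=.
    have := cnt_pos ls vl; rewrite /cnt /=.
    by case: (v \in A k); case: (count _ s) => [|[|n]] //=; rewrite ?andbF.
  by rewrite /b0; congr (meets _ _); solve_set k s.
have hz : zq s e = a0 || b0.
  by rewrite /zq /a0 /b0 -!meetsU; apply: meets_eq; solve_set k s.
have hw : wq s e = a2 || b2.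
  by rewrite /wq /a2 /b2 -!meetsU; apply: meets_eq; solve_set k s.
have hc : cross e (A k :&: C2 s) = b2 && [|| a0, a1, a2, b0 | b1].
  rewrite /cross /a0 /a1 /a2 /b0 /b1 /b2 !orbA -!meetsU; congr (_ && _);
  apply: meets_eq; solve_set k s.
have hA : cross e (A k) = [|| b0, b1 | b2] && [|| a0, a1 | a2].
  rewrite /cross /a0 /a1 /a2 /b0 /b1 /b2 !orbA -!meetsU; congr (_ && _);
  apply: meets_eq; solve_set k s.
rewrite hz' hw' hy' hc hz hw hA.
apply: sig_step.
- apply: sub_count => l /=; apply: meetsS; exact: subsetDl.
- move=> lt; case hb1: b1 => //.
  suff : ys = y by move=> eq; rewrite eq ltnn in lt.
  apply: eq_in_count => l ls /=.
  rewrite [RHS](meets_split _ _ (A k)).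
  case hb: (meets e (A l :&: C1 s :&: A k)); rewrite ?orbF //.
  suff : b1 by rewrite hb1.
  apply: meetsS hb; apply/subsetP => v; rewrite !inE.
  by case/andP => /andP [_ ->] ->.
- case/meetsP => v ve; rewrite inE => /andP [v1 vk].
  have [l ls vl] : exists2 l, l \in s & v \in A l.
    by apply: cnt_has; rewrite inE in v1; rewrite (eqP v1).
  rewrite /y /yq -has_count; apply/hasP; exists l => //.
  by apply/meetsP; exists v => //; rewrite inE vl.
- apply/idP/idP.
  + case/meetsP => v ve; rewrite !inE => /andP [vk v1].
    have [l ls vl] : exists2 l, l \in s & v \in A l.
      by apply: cnt_has; rewrite (eqP v1).
    rewrite /ys -has_count; apply/hasP; exists l => //.
    by apply/meetsP; exists v => //; rewrite !inE vl vk v1.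
  + rewrite /ys -has_count => /hasP [l ls /meetsP [v ve]].
    rewrite !inE => /andP [vk /andP [vl v1]].
    by apply/meetsP; exists v => //; rewrite !inE vk v1.
Qed.

Fixpoint candsum (s : seq I) (e : {set V}) : nat :=
  if s is k :: s' then cross e (A k :&: C2 s') + candsum s' e else 0.

Lemma edge_bound s e :
  sig (zq s e) (wq s e) (yq s e) + candsum s e <= \sum_(k <- s) cross e (A k).
Proof.
elim: s => [|k s IH].
  rewrite big_nil /= /yq /= /wq.
  have -> : C2 [::] = set0 by apply/setP => v; rewrite !inE.
  by rewrite /meets setI0 eqxx /sig; case: (zq _ _).
rewrite big_cons /=.
have := step s k e.
set a := sig _ _ _; set b := sig _ _ _; set c := nat_of_bool _; set d := nat_of_bool _.
lia.
Qed.

Lemma count_sumb (T : Type) (a : pred T) (r : seq T) : count a r = \sum_(x <- r) a x.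
Proof. by elim: r => [|x r IH]; rewrite ?big_nil ?big_cons //= IH. Qed.

Lemma sum_bound (E : seq {set V}) s :
  \sum_(e <- E) sig (zq s e) (wq s e) (yq s e) + \sum_(e <- E) candsum s e
  <= \sum_(k <- s) dcut E (A k).
Proof.
rewrite -big_split /=.
have H : \sum_(e <- E) (sig (zq s e) (wq s e) (yq s e) + candsum s e)
    <= \sum_(e <- E) \sum_(k <- s) cross e (A k).
  by apply: leq_sum => e _; exact: edge_bound.
apply: leq_trans H _.
rewrite exchange_big /=; apply: eq_leq; apply: eq_bigr => k _.
by rewrite /dcut count_sumb.
Qed.

Lemma candsum_cons (E : seq {set V}) k s :
  \sum_(e <- E) candsum (k :: s) e = dcut E (A k :&: C2 s) + \sum_(e <- E) candsum s e.
Proof. by rewrite /= big_split /= /dcut count_sumb. Qed.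

Lemma cand_sum (E : seq {set V}) (tl : seq I) :
  (forall k r, dcut E (A k) <= dcut E (A k :&: C2 (r ++ tl))) ->
  forall rest, \sum_(k <- rest) dcut E (A k) <= \sum_(e <- E) candsum (rest ++ tl) e.
Proof.
move=> H; elim => [|k r IH]; first by rewrite big_nil.
by rewrite big_cons cat_cons candsum_cons leq_add.
Qed.

Lemma count_gt1 (T : eqType) (a : pred T) (r : seq T) : uniq r ->
  (1 < count a r) <-> exists x y, [/\ x \in r, y \in r, x != y, a x & a y].
Proof.
move=> ur; split.
  rewrite -size_filter.
  have uf : uniq (filter a r) by apply: filter_uniq.
  have mf : forall x, x \in filter a r -> (x \in r) && a x
    by move=> x; rewrite mem_filter andbC.
  move: uf mf; case: (filter a r) => [|x [|y t]] //= /andP [nx _] mf _.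
  have /andP [xr ax] := mf x (mem_head _ _).
  have /andP [yr ay] : (y \in r) && a y by apply: mf; rewrite !inE eqxx orbT.
  exists x, y; split => //; apply/negP => /eqP exy; move: nx; rewrite exy mem_head.
  done.
case=> x [y [xr yr nxy ax ay]].
rewrite -size_filter.
have -> : 2 = size [:: x; y] by [].
apply: uniq_leq_size; first by rewrite /= andbT inE.
by move=> z; rewrite !inE mem_filter => /orP [] /eqP ->; rewrite ?ax ?ay.
Qed.

End Gen.

Lemma dcutC (V : finType) (E : seq {set V}) X : dcut E (~: X) = dcut E X.
Proof. by rewrite /dcut setCK; apply: eq_count => e; rewrite andbC. Qed.

Lemma nth_map_enum (p : nat) (T : Type) (f : 'I_p -> T) x0 a (Ha : a < p) :
  nth x0 [seq f i | i <- enum 'I_p] a = f (Ordinal Ha).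
Proof.
by rewrite (nth_map (Ordinal Ha)) ?size_enum_ord //; congr f; apply: val_inj; rewrite /= nth_enum_ord.
Qed.

Unset Implicit Arguments.
Set Strict Implicit.

Theorem lemma3p4 (V : finType) (E : seq {set V}) (R U : {set V})
  (p : nat) (u : 'I_p -> V) (A : 'I_p -> {set V}) :
  R != set0 -> R \proper U -> U \proper [set: V] ->
  2 <= p -> injective u ->
  (forall i, u i \in U :\: R) ->
  (forall i, min_terminal_cut E
       (([set u j | j : 'I_p] :|: R) :\ u i) (~: U) (~: A i)) ->
  (forall i, (u i \in A i) &&
       (u i \notin \bigcup_(j : 'I_p | j != i) A j)) ->
  let Z := \bigcap_(i : 'I_p) ~: A i in
  let W := \bigcup_(i : 'I_p) \bigcup_(j : 'I_p | i < j) (A i :&: A j) in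
  let Ys := [seq A i :\: W | i <- enum 'I_p] in
  is_partition_of_V (Ys ++ [:: W; Z]) /\
  (forall i j : 'I_p, i != j ->
     sigma E Ys W Z <= dcut E (A i) + dcut E (A j)).
Proof.
move=> R0 RU UV p2 uinj uin hmin huniq Z W Ys.
have me : forall l : 'I_p, l \in enum 'I_p by move=> l; rewrite mem_enum.
have eZ : Z = C0 A (enum 'I_p).
  apply/setP => v; rewrite /Z inE /cnt eqn0Ngt -has_count.
  apply/bigcapP/hasPn => [H k _ | H k _].
    by rewrite -in_setC; apply: H.
  by rewrite in_setC; apply: H; rewrite mem_enum.
have eW : W = C2 A (enum 'I_p).
  apply/setP => v; rewrite /W inE /cnt.
  apply/bigcupP/idP.
  - case=> a _ /bigcupP [b ab]; rewrite inE => /andP [va vb].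
    apply/(count_gt1 _ (enum_uniq _)); exists a, b; split; rewrite ?mem_enum //.
    by apply/eqP => eab; rewrite eab ltnn in ab.
  - move/(count_gt1 _ (enum_uniq _)) => [a [b [_ _ nab va vb]]].
    case: (ltngtP a b) => [ab|ba|eab].
    + by exists a => //; apply/bigcupP; exists b => //; rewrite inE va vb.
    + by exists b => //; apply/bigcupP; exists a => //; rewrite inE va vb.
    + by case/eqP: nab; apply: val_inj.
split.
  split.
    move=> a b; rewrite size_cat size_map size_enum_ord /= => Ha Hb nab.
    wlog lab : a b Ha Hb nab / a < b.
      move=> H; case: (ltngtP a b) => [ab|ba|eab].
      - exact: H.
      - by rewrite disjoint_sym; apply: H => //; rewrite eq_sym.
      - by rewrite eab eqxx in nab.
    rewrite -setI_eq0; apply/eqP/setP => v; rewrite inE in_set0.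
    rewrite !nth_cat size_map size_enum_ord.
    case: (ltnP b p) => bp.
      have ap : a < p by apply: ltn_trans lab bp.
      rewrite ap /Ys (nth_map_enum _ _ ap) (nth_map_enum _ _ bp) !inE.
      apply/negP => /and3P [/andP [nW va] _ vb].
      case/negP: nW; rewrite eW inE /cnt.
      apply/(count_gt1 _ (enum_uniq _)); exists (Ordinal ap), (Ordinal bp).
      split; rewrite ?mem_enum //.
    case: (ltnP a p) => ap.
      rewrite /Ys (nth_map_enum _ _ ap).
      have [->|->] : b - p = 0 \/ b - p = 1 by lia.
        by rewrite /= !inE; case: (v \in W); rewrite ?andbF.
      rewrite /= eZ !inE; apply/negP => /andP [/andP [_ va] /eqP h0].
      by have := cnt_pos (me (Ordinal ap)) va; rewrite h0.
    have -> : a - p = 0 by lia.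
    have -> : b - p = 1 by lia.
    rewrite /= eZ eW !inE; apply/negP => /andP [h1 /eqP h2].
    by rewrite h2 in h1.
  move=> v; case hc: (cnt A (enum 'I_p) v) => [|[|n]].
  - by exists Z; [rewrite mem_cat !inE eqxx !orbT | rewrite eZ inE hc].
  - have [l _ vl] := cnt_has (A:=A) (s:=enum 'I_p) (v:=v) (ltac:(by rewrite hc)).
    exists (A l :\: W).
      by rewrite mem_cat; apply/orP; left; rewrite /Ys; apply: map_f; exact: mem_enum.
    by rewrite !inE vl eW inE hc andbT.
  - by exists W; [rewrite mem_cat !inE eqxx !orbT | rewrite eW inE hc].
move=> i j nij.
have pL : perm_eq ([seq k <- enum 'I_p | (k != i) && (k != j)] ++ [:: j; i]) (enum 'I_p).
  apply: uniq_perm.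
  - rewrite cat_uniq filter_uniq ?enum_uniq //= !mem_filter !eqxx !andbF /= inE eq_sym nij.
    by [].
  - exact: enum_uniq.
  - by move=> k; rewrite mem_cat mem_filter !inE me andbT; case: (k == i); case: (k == j).
have cL : forall v, cnt A ([seq k <- enum 'I_p | (k != i) && (k != j)] ++ [:: j; i]) v
                    = cnt A (enum 'I_p) v.
  by move=> v; rewrite /cnt (permP pL).
set L := ([seq k <- enum 'I_p | (k != i) && (k != j)] ++ [:: j; i]) in pL cL.
have eC0 : C0 A L = Z by rewrite eZ; apply/setP => v; rewrite !inE cL.
have eC2 : C2 A L = W by rewrite eW; apply/setP => v; rewrite !inE cL.
have eC1 : forall l, A l :&: C1 A L = A l :\: W.
  move=> l; rewrite eW; apply/setP => v; rewrite !inE cL.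
  case vl: (v \in A l); rewrite ?andbF //=.
  by have := cnt_pos (me l) vl; case: (cnt A (enum 'I_p) v) => [|[|n]].
have eyq : forall e, yq A L e = count (meets e) Ys.
  move=> e; rewrite /Ys count_map -(permP pL) /yq; apply: eq_count => l /=.
  by rewrite eC1.
have esub : forall e : {set V}, (e \subset W :|: Z) = (count (meets e) Ys == 0).
  move=> e; rewrite /Ys count_map eqn0Ngt -has_count.
  apply/subsetP/hasPn => [H l _ | H v ve] /=.
    apply/negP => /meetsP [v ve]; rewrite inE => /andP [nW vl].
    have := H v ve; rewrite inE (negbTE nW) /= eZ inE eqn0Ngt.
    by rewrite (cnt_pos (me l) vl).
  rewrite inE; case vW: (v \in W) => //=.
  rewrite eZ inE eqn0Ngt; apply/negP => /cnt_has [l _ vl].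
  have := H l (me l); rewrite /= => /negP; apply.
  by apply/meetsP; exists v => //; rewrite inE vW vl.
have key : sigma E Ys W Z = \sum_(e <- E) sig (zq A L e) (wq A L e) (yq A L e).
  rewrite /sigma /cost_parts /cost2 /alpha /beta !count_sumb -!big_split /=.
  apply: eq_bigr => e _.
  by rewrite /sig /zq /wq eC0 eC2 eyq /meets_two count_cat /= -cats1 count_cat /= !addn0 esub.
have hmin' : forall k r, dcut E (A k) <= dcut E (A k :&: C2 A (r ++ [:: j; i])).
  move=> k r; have [tc ge] := hmin k.
  rewrite -(dcutC E (A k)) -(dcutC E (A k :&: C2 A (r ++ [:: j; i]))).
  apply: ge; rewrite /terminal_cut; case/andP: tc => t1 t2.
  apply/andP; split.
    by apply: subset_trans t1 _; rewrite setCS; exact: subsetIl.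
  rewrite setCS; apply/subsetP => v vU.
  have hA : forall l, v \in A l.
    move=> l; have [tcl _] := hmin l; case/andP: tcl => _.
    by rewrite setCS => /subsetP; apply.
  rewrite inE hA /= inE /cnt count_cat /= !hA.
  set c := count _ r; lia.
have h1 := sum_bound A E L.
have h2 := cand_sum hmin' [seq k <- enum 'I_p | (k != i) && (k != j)].
move: h1 h2; rewrite key /L big_cat /= !big_cons big_nil.
set s1 := \sum_(e <- E) _; set s2 := \sum_(e <- E) _; set s3 := \sum_(k <- _) _.
lia.
Qed.
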